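(* Let $a,b\geq 1$ be integers. Let $x\in\Lambda^{a+b}$ satisfy $x_1+\cdots+x_{a+b}>b\,x_{a+b}$ and $x_{a+b}\geq 2x_a$. Then $y=T_{a,b}(x)$ satisfies $y_1+\cdots+y_{a+b}>b\,y_{a+b}$.
   Context: For $n\geq 1$ let $\Lambda^n=\{x\in\mathbb{R}^n : 0\leq x_1\leq\cdots\leq x_n\}$. For integers $a,b\geq 1$ the map $T_{a,b}:\Lambda^{a+b}\to\Lambda^{a+b}$ sends $x$ to the vector obtained by arranging $x_1,\ldots,x_a,\,x_{a+1}-x_a,\ldots,x_{a+b}-x_a$ in nondecreasing order. *)

(* Defs.v *)
From HB Require Import structures.
From mathcomp Require Import all_boot all_order all_algebra.
Set Implicit Arguments. Unset Strict Implicit. Unset Printing Implicit Defensive.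
Import Order.TTheory GRing.Theory Num.Theory.
Local Open Scope ring_scope.

(* Vectors of R^n are represented as sequences of length n; the paper's
   1-based coordinate x_i is  nth 0 x (i-1). *)

Definition Lambda (R : realFieldType) (n : nat) (x : seq R) : bool :=
  (size x == n) && sorted <=%R (0 :: x).

Definition T (R : realFieldType) (a b : nat) (x : seq R) : seq R :=
  sort <=%R (take a x ++ [seq t - nth 0 x a.-1 | t <- take b (drop a x)]).

(* Main.v *)
Require Import Defs.
From HB Require Import structures.
From mathcomp Require Import all_boot all_order all_algebra.
From mathcomp Require Import zify ring lra.
Import Order.TTheory GRing.Theory Num.Theory.
Local Open Scope ring_scope.

Theorem lemma5p1 (R : realFieldType) (a b : nat) (x : seq R) :
  (1 <= a)%N -> (1 <= b)%N -> Lambda (a + b) x ->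
  b%:R * nth 0 x (a + b).-1 < \sum_(t <- x) t ->
  2 * nth 0 x a.-1 <= nth 0 x (a + b).-1 ->
  b%:R * nth 0 (T a b x) (a + b).-1 < \sum_(t <- T a b x) t.
Proof.
move=> ha hb /andP[/eqP sx srt] hsum h2.
set m := nth 0 x a.-1; set M := nth 0 x (a + b).-1.
have hM : M = nth 0 x (a + b).-1 by [].
have hm : m = nth 0 x a.-1 by [].
clearbody m M.
have L : forall i j, (i <= j)%N -> (j <= a + b)%N ->
    nth 0 (0 :: x) i <= nth 0 (0 :: x) j.
  move=> i j hij hj; apply: (sorted_leq_nth le_trans lexx) => //;
    rewrite inE /= sx ltnS //; exact: leq_trans hij hj.
have m0 : 0 <= m.
  have := L 0%N a (leq0n _) (leq_addr _ _); by rewrite /= hm -{1}(prednK ha).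
have Lx : forall i j, (i <= j)%N -> (j < a + b)%N -> nth 0 x i <= nth 0 x j.
  by move=> i j hij hj; have := L i.+1 j.+1 hij hj.
set s := take a x ++ [seq t - m | t <- take b (drop a x)].
have tb : take b (drop a x) = drop a x.
  by rewrite take_oversize // size_drop sx addKn.
have ss : size s = (a + b)%N.
  rewrite size_cat size_map tb size_drop size_take sx; case: ifP; lia.
have hT : T a b x = sort <=%R s by rewrite /T /s hm.
have hall : forall t, t \in s -> t <= M - m.
  move=> t; rewrite mem_cat => /orP[].
    move=> /(nthP 0) [i]; rewrite size_take sx.
    case: ifP => hab hi; last by move: hab; lia.
    rewrite nth_take // => <-.
    apply: (le_trans (Lx i a.-1 _ _)); try lia.
    rewrite -hm; lra.
  move/mapP => [u]; rewrite tb => /(nthP 0) [i]; rewrite size_drop sx => hi.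
  rewrite nth_drop => <- ->; rewrite lerD2r hM; apply: Lx. 1: lia. by rewrite ltn_predL addn_gt0 ha.
have hin : M - m \in s.
  rewrite mem_cat; apply/orP; right; apply/mapP; exists M => //.
  rewrite tb; apply/(nthP 0); exists b.-1; first by rewrite size_drop sx; lia.
  rewrite nth_drop hM; congr nth; lia.
have y_eq : nth 0 (T a b x) (a + b).-1 = M - m.
  have srty : sorted <=%R (T a b x) by apply: sort_sorted; exact: le_total.
  have sy : size (T a b x) = (a + b)%N by rewrite hT size_sort.
  apply/eqP; rewrite eq_le; apply/andP; split.
    apply: hall; rewrite -(mem_sort <=%R) -hT; apply: mem_nth; rewrite sy; lia.
  have : M - m \in T a b x by rewrite hT mem_sort.
  move=> /(nthP 0) [i]; rewrite sy => hi <-.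
  apply: (sorted_leq_nth le_trans lexx 0 srty); rewrite /in_mem /= ?sy; lia.
have sumy : \sum_(t <- T a b x) t = \sum_(t <- x) t - b%:R * m.
  rewrite hT (perm_big _ (permEl (perm_sort _ _))) big_cat /= big_map.
  rewrite tb -{3}(cat_take_drop a x) big_cat /= sumrB.
  rewrite big_const_seq count_predT size_drop sx addKn /=.
  by rewrite iter_addr_0 mulr_natl addrA.
rewrite y_eq sumy mulrBr ltrD2r hM; exact: hsum.
Qed.
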